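(* Let $n\ge 2$ and $1\le k<n$, and let $G=H_B(n,k)$. Then: (i) every vertex of $V_1$ has degree $d_{V_1}(k)=\sum_{s=1}^{k}2^{s-1}\binom{k}{s}-1+\sum_{t=1}^{n-k}2^{k+t-1}\binom{n-k}{t}=\frac{3^k-3}{2}+2^{k-1}(3^{n-k}-1)$, and there are $\binom{n}{k}$ such vertices; (ii) for $1\le r<k$, every $r$-vertex of $V_2$ has degree $\binom{n-r}{k-r}$, and there are $2^{r-1}\binom{n}{r}$ such vertices; (iii) every $k$-vertex of $V_2$ has degree $1$, and there are $(2^{k-1}-1)\binom{n}{k}$ such vertices; (iv) for $k<r\le n$, every $r$-vertex of $V_2$ has degree $\binom{r}{k}$, and there are $2^{r-1}\binom{n}{r}$ such vertices. Consequently the degree sequence of $G$ is obtained by arranging these degrees, each repeated with the stated multiplicity, in non-increasing order.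
   Context: Fix integers $n\ge 2$ and $1\le k<n$ and positive real numbers $x_1<x_2<\dots<x_n$. Let $\mathscr{B}_n=\{\pm x_1,\pm x_2,\dots,\pm x_{n-1},x_n\}$ (so $-x_n\notin\mathscr{B}_n$). Let $\phi(\mathscr{B}_n)$ be the family of all nonempty subsets $S\subseteq\mathscr{B}_n$ whose elements have pairwise distinct absolute values and whose element of largest absolute value is positive. Let $\mathscr{B}_n^+=\{x_1,\dots,x_n\}$, let $V_1$ be the set of all $k$-element subsets of $\mathscr{B}_n^+$, and let $V_2=\phi(\mathscr{B}_n)\setminus V_1$. For $A\in\phi(\mathscr{B}_n)$ put $A^\dagger=\{|a|:a\in A\}$. The bipartite Kneser B type-$k$ graph $H_B(n,k)$ is the simple graph with vertex set $V_1\cup V_2$ in which $X\in V_1$ and $Y\in V_2$ are adjacent if and only if $X\subseteq Y^\dagger$ or $Y^\dagger\subseteq X$, and there are no other edges. An $r$-vertex is a vertex having exactly $r$ elements. *)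

(* Defs.v *)
From HB Require Import structures.
From mathcomp Require Import all_boot all_order all_algebra.
Set Implicit Arguments. Unset Strict Implicit. Unset Printing Implicit Defensive.
Import Order.TTheory GRing.Theory Num.Theory.

(* Encoding: an element of B_n = {±x_1,...,±x_{n-1}, x_n} is a pair
   (i, s) : 'I_n * bool, denoting  x_{i+1} if s = true and -x_{i+1} if s = false.  B_n excludes the pair (n-1, false),
   i.e. -x_n. *)

Definition sval (R : realDomainType) (n : nat) (x : 'I_n -> R)
  (a : 'I_n * bool) : R := if a.2 then x a.1 else (- x a.1)%R.

Definition Bn (n : nat) : {set 'I_n * bool} :=
  [set a | a.2 || (nat_of_ord a.1 != n.-1)].

Definition Bplus (n : nat) : {set 'I_n * bool} := [set a | a.2].

Definition phiB (R : realDomainType) (n : nat) (x : 'I_n -> R)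
  : {set {set 'I_n * bool}} :=
  [set S : {set 'I_n * bool} |
    [&& S \subset Bn n, S != set0,
        [forall a in S, forall b in S,
            (`|sval x a| == `|sval x b|)%R ==> (a == b)] &
        [forall a in S,
            [forall b in S, (`|sval x b| <= `|sval x a|)%R] ==> (0 < sval x a)%R]]].

Definition V1 (n k : nat) : {set {set 'I_n * bool}} :=
  [set S : {set 'I_n * bool} | (S \subset Bplus n) && (#|S| == k)].

Definition V2 (R : realDomainType) (n k : nat) (x : 'I_n -> R)
  : {set {set 'I_n * bool}} := phiB x :\: V1 n k.

Definition dagger (R : realDomainType) (n : nat) (x : 'I_n -> R)
  (A : {set 'I_n * bool}) : {set 'I_n * bool} :=
  [set b in Bplus n | [exists a in A, (sval x b == `|sval x a|)%R]].

Definition HBcond (R : realDomainType) (n : nat) (x : 'I_n -> R)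
  (X Y : {set 'I_n * bool}) : bool :=
  (X \subset dagger x Y) || (dagger x Y \subset X).

Definition HBvert (R : realDomainType) (n k : nat) (x : 'I_n -> R)
  : {set {set 'I_n * bool}} := V1 n k :|: V2 k x.

Definition HBadj (R : realDomainType) (n k : nat) (x : 'I_n -> R)
  : rel {set 'I_n * bool} := fun X Y =>
  [&& X \in V1 n k, Y \in V2 k x & HBcond x X Y] ||
  [&& Y \in V1 n k, X \in V2 k x & HBcond x Y X].

Definition HBdeg (R : realDomainType) (n k : nat) (x : 'I_n -> R)
  (X : {set 'I_n * bool}) : nat :=
  #|[set Y in HBvert k x | HBadj k x X Y]|.

Definition dV2 (n k r : nat) : nat :=
  if (r < k)%N then 'C(n - r, k - r) else if r == k then 1%N else 'C(r, k).
Definition mV2 (n k r : nat) : nat :=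
  if r == k then ((2 ^ (k - 1) - 1) * 'C(n, k))%N else (2 ^ (r - 1) * 'C(n, r))%N.

Definition dV1 (n k : nat) : nat :=
  ((3 ^ k - 3) %/ 2 + 2 ^ (k - 1) * (3 ^ (n - k) - 1))%N.

Definition claimed_degrees (n k : nat) : seq nat :=
  nseq 'C(n, k) (dV1 n k) ++ flatten [seq nseq (mV2 n k r) (dV2 n k r) | r <- iota 1 n].

(* Main.v *)
Require Import Defs.
From HB Require Import structures.
From mathcomp Require Import all_boot all_order all_algebra.
Import Order.TTheory GRing.Theory Num.Theory.
From mathcomp Require Import zify ring.
Set Implicit Arguments. Unset Strict Implicit. Unset Printing Implicit Defensive.

Section Basic.
Variables (R : realDomainType) (n : nat) (x : 'I_n -> R).
Hypothesis hpos : forall i : 'I_n, (0 < x i)%R.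
Hypothesis hinc : forall i j : 'I_n, (i < j)%N -> (x i < x j)%R.

Lemma x_le (i j : 'I_n) : (x i <= x j)%R = (i <= j)%N.
Proof.
case: (ltngtP i j) => [h|h|/val_inj ->].
- by rewrite ltW // hinc.
- by apply/negbTE; rewrite -ltNge hinc.
- by rewrite lexx.
Qed.

Lemma x_eq (i j : 'I_n) : (x i == x j) = (i == j).
Proof.
apply/idP/idP => [/eqP h|/eqP -> //].
have := x_le i j; have := x_le j i; rewrite h lexx => h1 h2.
by rewrite -val_eqE eqn_leq -h1 -h2.
Qed.

Lemma abs_sval a : `|Defs.sval x a|%R = x a.1.
Proof. by rewrite /Defs.sval; case: a.2; rewrite ?normrN gtr0_norm. Qed.

Lemma sval_pos a : (0 < Defs.sval x a)%R = a.2.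
Proof.
rewrite /Defs.sval; case: a.2 => //; first exact: hpos.
by apply/negbTE; rewrite -leNgt oppr_le0 ltW.
Qed.

Definition good (S : {set 'I_n * bool}) :=
  [&& S != set0,
      [forall a in S, forall b in S, (a.1 == b.1) ==> (a == b)] &
      [forall a in S, [forall b in S, (b.1 <= a.1)%N] ==> a.2]].

Lemma phiBE S : (S \in phiB x) = good S.
Proof.
rewrite /phiB inE /good.
have E1 : [forall a in S, forall b in S,
            (`|Defs.sval x a| == `|Defs.sval x b|)%R ==> (a == b)] =
          [forall a in S, forall b in S, (a.1 == b.1) ==> (a == b)].
  apply/eq_forallb => a /=; congr (_ ==> _); apply/eq_forallb => b /=.
  by rewrite !abs_sval x_eq.
have E2 : [forall a in S,
            [forall b in S, (`|Defs.sval x b| <= `|Defs.sval x a|)%R] ==> (0 < Defs.sval x a)%R] =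
          [forall a in S, [forall b in S, (b.1 <= a.1)%N] ==> a.2].
  apply/eq_forallb => a /=; rewrite sval_pos; congr (_ ==> _); congr (_ ==> _).
  apply/eq_forallb => b /=; congr (_ ==> _).
  by rewrite !abs_sval x_le.
rewrite E1 E2; apply/idP/idP.
  by case/and4P => _ h1 h2 h3; apply/and3P.
case/and3P => h1 h2 h3.
apply/and4P; split => //; apply/subsetP => a aS; rewrite /Bn inE.
case a2: a.2 => //=; apply/negP => /eqP an.
move/forallP: h3 => /(_ a); rewrite aS /= a2 implybF => /negP; apply.
apply/forallP => b; apply/implyP => _; rewrite an.
by rewrite -ltnS prednK ?ltn_ord //; case: (a.1) => i /=; case: n.
Qed.

Definition dag (S : {set 'I_n * bool}) : {set 'I_n * bool} :=
  [set b | b.2 && [exists a in S, b.1 == a.1]].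

Lemma daggerE S : dagger x S = dag S.
Proof.
apply/setP => b; rewrite /dagger /dag !inE /Bplus ?inE.
case b2: b.2 => //=; apply: eq_existsb => a.
by rewrite abs_sval /Defs.sval b2 x_eq.
Qed.


Definition pos (a : 'I_n * bool) := (a.1, true).

Lemma good_inj S : good S -> {in S &, forall a b, a.1 = b.1 -> a = b}.
Proof.
case/and3P => _ /forallP h _ a b aS bS e.
by move: (h a); rewrite aS => /forallP /(_ b); rewrite bS e eqxx /= => /eqP.
Qed.

Lemma dagE S : dag S = pos @: S.
Proof.
apply/setP => b; rewrite inE; apply/andP/imsetP.
  by case=> b2 /existsP[a /andP[aS /eqP e]]; exists a => //; case: b b2 e => ? [] //= _ ->.
by case=> a aS ->; split => //; apply/existsP; exists a; rewrite aS /=.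
Qed.

Lemma dag_card S : good S -> #|dag S| = #|S|.
Proof.
move=> g; rewrite dagE card_in_imset // => a b aS bS [] e.
exact: (good_inj g).
Qed.

Lemma dag_sub S : dag S \subset Bplus n.
Proof. by apply/subsetP => b; rewrite inE /Bplus inE => /andP[]. Qed.

Lemma Bplus_pos a (D : {set 'I_n * bool}) : D \subset Bplus n -> a \in D -> pos a = a.
Proof.
move=> /subsetP h /h; rewrite /Bplus inE /pos; by case: a => ? [].
Qed.

Lemma dag_Bplus (X : {set 'I_n * bool}) : X \subset Bplus n -> dag X = X.
Proof.
move=> h; rewrite dagE; apply/setP => b; apply/imsetP/idP.
  by case=> a aX ->; rewrite (Bplus_pos h aX).
by move=> bX; exists b => //; rewrite (Bplus_pos h bX).
Qed.

Lemma dag0 S : (dag S == set0) = (S == set0).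
Proof. by rewrite dagE imset_eq0. Qed.

Lemma good_Bplus (X : {set 'I_n * bool}) : X \subset Bplus n -> X != set0 -> good X.
Proof.
move=> h ne; apply/and3P; split => //.
  apply/forallP => a; apply/implyP => aX; apply/forallP => b; apply/implyP => bX.
  by apply/implyP => /eqP e; rewrite -(Bplus_pos h aX) -(Bplus_pos h bX) /pos e.
apply/forallP => a; apply/implyP => aX; apply/implyP => _.
by rewrite -(Bplus_pos h aX).
Qed.

Lemma card_Bplus : #|Bplus n| = n.
Proof.
have -> : Bplus n = [set (i, true) | i : 'I_n].
  apply/setP => b; rewrite /Bplus inE; apply/idP/imsetP.
    by case: b => i [] // _; exists i.
  by case=> i _ ->.
by rewrite card_imset ?card_ord // => i j [].
Qed.

End Basic.

Section Fiber.
Variable n : nat.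
Notation T := ('I_n * bool)%type.

Definition flip (a : T) := (a.1, ~~ a.2).
Lemma flipK : involutive flip. Proof. by case=> i s; rewrite /flip /= negbK. Qed.

Definition mkS (D N : {set T}) := (D :\: N) :|: flip @: N.

Lemma in_flipset (N : {set T}) a : (a \in flip @: N) = (flip a \in N).
Proof.
apply/imsetP/idP => [[b bN ->]|h]; first by rewrite flipK.
by exists (flip a); rewrite ?flipK.
Qed.

Lemma memS (D N : {set T}) a : D \subset Bplus n -> N \subset D ->
  (a \in mkS D N) = (pos a \in D) && (a.2 == (pos a \notin N)).
Proof.
move=> /subsetP hD /subsetP hN; rewrite /mkS !inE in_flipset.
case: a => i [] /=; rewrite /pos /flip /=.
  case: ((i, false) \in N) / boolP => h.
    by move: (hD _ (hN _ h)); rewrite /Bplus inE.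
  by rewrite orbF; case: ((i,true) \in D); case: ((i,true) \in N).
case: ((i, false) \in D) / boolP => h.
  by move: (hD _ h); rewrite /Bplus inE.
rewrite andbF /=; case h2: ((i,true) \in N); last by rewrite andbF.
by rewrite (hN _ h2).
Qed.

Lemma Bplus_same (D : {set T}) a b : D \subset Bplus n -> a \in D -> b \in D ->
  a.1 = b.1 -> a = b.
Proof.
move=> hD aD bD e; by rewrite -(Bplus_pos hD aD) -(Bplus_pos hD bD) /pos e.
Qed.

Lemma fiber_card (D : {set T}) : D \subset Bplus n -> D != set0 ->
  #|[set S | good S && (dag S == D)]| = 2 ^ (#|D| - 1).
Proof.
move=> hD ne.
have [m mD hmax] : exists2 m, m \in D & forall b, b \in D -> (b.1 <= m.1)%N.
  case/set0Pn: ne => m0 m0D.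
  case: (@arg_maxnP _ m0 (mem D) (fun b : T => nat_of_ord b.1) m0D) => m mD h.
  by exists m.
have hm : pos m = m by exact: Bplus_pos hD mD.
have m2 : m.2 by move: hm; case: m {mD hmax} => ? [].
have E : [set S | good S && (dag S == D)] = mkS D @: powerset (D :\ m).
  apply/setP => S; rewrite inE; apply/idP/imsetP.
  - case/andP => g /eqP dS.
    set N := [set b in D | flip b \in S].
    have NsD : N \subset D by apply/subsetP => b; rewrite inE => /andP[].
    have posS a : a \in S -> pos a \in D.
      by move=> aS; rewrite -dS dagE; apply/imsetP; exists a.
    exists N.
      rewrite inE; apply/subsetP => b; rewrite !inE => /andP[bD fbS].
      rewrite bD andbT; apply/eqP => ebm; subst b.
      case/and3P: g => _ _ /forallP /(_ (flip m)); rewrite fbS /=.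
      rewrite /flip /= m2 /= implybF => /negP; apply; apply/forallP => b.
      apply/implyP => bS; exact: hmax (posS _ bS).
    apply/setP => a; rewrite memS //.
    apply/idP/idP => [aS|/andP[paD /eqP a2]].
      rewrite posS //= inE posS //=.
      case: a aS => i s aS; rewrite /pos /flip /=.
      case: s aS => aS /=.
        apply/negP => fS; have := good_inj g aS fS erefl; by [].
      by rewrite aS.
    move: paD; rewrite -{1}dS dagE => /imsetP[c cS ec].
    case: a ec a2 => i s; rewrite /pos /= inE => [[ei]] a2.
    have pD : (i, true) \in D by rewrite ei -[(c.1, true)]/(pos c) posS.
    case: s a2; rewrite pD /=.
      move=> /esym h.
      case: c cS ei => j [] cS /= ej; subst j => //.
      by move: h; rewrite /flip /= cS.
    by move=> /esym/negbFE; rewrite /flip.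
  - case=> N; rewrite inE => NsDm ->.
    have NsD : N \subset D by apply: subset_trans NsDm (subD1set _ _).
    have mN : m \notin N by apply/negP => /(subsetP NsDm); rewrite !inE eqxx.
    have mS : m \in mkS D N by rewrite memS // hm mD m2 mN.
    have posS a : a \in mkS D N -> pos a \in D by rewrite memS // => /andP[].
    apply/andP; split.
      apply/and3P; split.
      + by apply/set0Pn; exists m.
      + apply/forallP => a; apply/implyP => aS; apply/forallP => b; apply/implyP => bS.
        apply/implyP => /eqP e; move: aS bS; rewrite !memS // /pos e.
        case: a b e => i s [j t] /= -> /andP[_ /eqP ->] /andP[_ /eqP ->] //.
      + apply/forallP => a; apply/implyP => aS; apply/implyP => /forallP /(_ m).
        rewrite mS /= => ma.
        have e : pos a = m.
          apply: (Bplus_same hD (posS _ aS) mD); apply/eqP; rewrite -val_eqE eqn_leq ma andbT.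
          exact: (hmax _ (posS _ aS)).
        by move: aS; rewrite memS // e mN => /andP[_ /eqP ->].
    apply/eqP/setP => b; rewrite dagE; apply/imsetP/idP.
      by case=> a aS ->; apply: posS.
    move=> bD; exists (b.1, b \notin N).
      by rewrite memS // /pos /= -[(b.1,true)]/(pos b) (Bplus_pos hD bD) bD eqxx.
    by rewrite /pos /= -[(b.1,true)]/(pos b) (Bplus_pos hD bD).
rewrite E card_in_imset.
  by rewrite card_powerset (cardsD1 m D) mD add1n subn1.
move=> N1 N2; rewrite !inE => h1 h2 e.
have s1 : N1 \subset D by apply: subset_trans h1 (subD1set _ _).
have s2 : N2 \subset D by apply: subset_trans h2 (subD1set _ _).
have key (N : {set T}) b : N \subset D -> b \in D -> (b \in N) = (flip b \in mkS D N).
  move=> sN bD; rewrite memS // /flip /pos /=.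
  rewrite -[(b.1,true)]/(pos b) (Bplus_pos hD bD) bD /=.
  have -> : b.2 by move: hD => /subsetP /(_ _ bD); rewrite /Bplus inE.
  by case: (b \in N).
apply/setP => b; case: (b \in D) / boolP => bD.
  by rewrite (key _ _ s1 bD) (key _ _ s2 bD) e.
apply/idP/idP => h; [by case/negP: bD; apply: (subsetP s1) | by case/negP: bD; apply: (subsetP s2)].
Qed.


Lemma count_good (P : pred {set T}) :
  #|[set S | good S && P (dag S)]| =
  \sum_(D : {set T} | [&& D \subset Bplus n, D != set0 & P D]) 2 ^ (#|D| - 1).
Proof.
rewrite -sum1_card.
rewrite (eq_bigl (fun S => good S && P (dag S))); last by move=> S; rewrite inE.
rewrite (@partition_big _ _ _ _ _ _ _ (@dag n)
   (fun D => [&& D \subset Bplus n, D != set0 & P D])); last first.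
  move=> S /andP[g PS]; rewrite dag_sub PS andbT dag0.
  by case/and3P: g.
apply: eq_bigr => D /and3P[hD ne PD].
rewrite -(fiber_card hD ne) -sum1_card; apply: eq_bigl => S; rewrite inE.
by case: eqP => [->|]; rewrite ?PD ?andbT ?andbF.
Qed.

End Fiber.

Section Generic.
Variable T0 : finType.

Lemma sum_by_size (Q : pred {set T0}) (f : nat -> nat) N :
  (forall X, Q X -> #|X| <= N) ->
  \sum_(X | Q X) f #|X| =
  \sum_(0 <= s < N.+1) f s * #|[set X | Q X & #|X| == s]|.
Proof.
move=> hN.
rewrite (@partition_big _ _ _ _ _ _ Q (fun X : {set T0} => inord #|X| : 'I_N.+1) xpredT) //.
rewrite big_mkord; apply: eq_bigr => s _.
rewrite mulnC -sum_nat_const; apply: eq_big => X.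
  by rewrite inE; case: (boolP (Q X)) => //= qX; rewrite -val_eqE /= inordK // ltnS hN.
case/andP => qX; rewrite -val_eqE /= inordK ?ltnS ?hN // => /eqP -> //.
Qed.

Lemma super_sum (X B : {set T0}) (P : nat -> bool) (F : nat -> nat) :
  X \subset B ->
  \sum_(D : {set T0} | [&& X \subset D, D \subset B & P #|D|]) F #|D| =
  \sum_(W : {set T0} | (W \subset B :\: X) && P (#|X| + #|W|)) F (#|X| + #|W|).
Proof.
move=> XB.
have cU (W : {set T0}) : W \subset B :\: X -> #|X :|: W| = #|X| + #|W|.
  move=> WB; rewrite cardsU; suff -> : X :&: W = set0 by rewrite cards0 subn0.
  apply/setP => a; rewrite !inE; apply/negbTE/negP => /andP[aX aW].
  by move: (subsetP WB a aW); rewrite !inE aX.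
have inj : {in [set W : {set T0} | (W \subset B :\: X) && P (#|X| + #|W|)] &, injective (fun W => X :|: W)}.
  move=> W1 W2; rewrite !inE => /andP[h1 _] /andP[h2 _] e.
  apply/setP => a; have := congr1 (fun S : {set T0} => a \in S) e; rewrite /= !inE.
  case aX : (a \in X) => //= _.
  apply/idP/idP => h; [move: (subsetP h1 a h) | move: (subsetP h2 a h)]; by rewrite !inE aX.
rewrite [RHS](eq_big (fun W => W \in [set W : {set T0} | (W \subset B :\: X) && P (#|X| + #|W|)]) (fun W => F #|X :|: W|)); first last.
- by move=> W /andP[hW _]; rewrite cU.
- by move=> W; rewrite inE.
rewrite -(big_imset (fun D : {set T0} => F #|D|) inj) /=.
apply: eq_bigl => D; apply/idP/imsetP.
  case/and3P => XD DB PD; exists (D :\: X).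
    rewrite inE setSD //=.
    suff -> : #|X| + #|D :\: X| = #|D| by [].
    by rewrite cardsD (setIidPr XD) subnKC // subset_leq_card.
  apply/setP => a; rewrite !inE; case aX : (a \in X) => //=.
  by rewrite (subsetP XD a aX).
case=> W; rewrite inE => /andP[WB PW] ->.
rewrite subsetUl cU // PW andbT /=; apply/subUsetP; split => //.
by apply: subset_trans WB (subsetDl _ _).
Qed.

Lemma super_size (X B : {set T0}) s : X \subset B -> #|X| <= s ->
  #|[set D : {set T0} | [&& X \subset D, D \subset B & #|D| == s]]| = 'C(#|B| - #|X|, s - #|X|).
Proof.
move=> XB Xs.
rewrite -sum1_card (eq_bigl (fun D : {set T0} => [&& X \subset D, D \subset B & #|D| == s])); last first.
  by move=> D; rewrite inE.
rewrite (super_sum (fun d => d == s) (fun _ => 1) XB) sum1_card.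
have e : #|B| - #|X| = #|B :\: X| by rewrite cardsD (setIidPr XB).
rewrite e -cards_draws; apply: eq_card => W; rewrite !inE.
by rewrite -(eqn_add2l #|X|) subnKC.
Qed.

End Generic.

Lemma sumA m : 2 * \sum_(1 <= s < m.+1) 2 ^ (s - 1) * 'C(m, s) = 3 ^ m - 1.
Proof.
have -> : 3 ^ m = (1 + 2) ^ m by [].
rewrite expnDn -(big_mkord xpredT (fun i => 'C(m, i) * (1 ^ (m - i) * 2 ^ i))).
rewrite [in RHS]big_ltn // bin0 exp1n expn0 !mul1n addKn big_distrr /=.
apply: eq_big_nat => s /andP[s1 _].
by rewrite exp1n mul1n mulnA -expnS subn1 prednK // mulnC.
Qed.

Lemma numV1 n k : 1 <= k ->
  \sum_(1 <= s < k.+1) 2 ^ (s - 1) * 'C(k, s) - 1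
  + \sum_(1 <= t < (n - k).+1) 2 ^ (k + t - 1) * 'C(n - k, t) = dV1 n k.
Proof.
move=> hk; rewrite /dV1.
set a := \sum_(1 <= s < k.+1) _.
have ha := sumA k; rewrite -/a in ha.
congr (_ + _).
  have -> : 3 ^ k - 3 = 2 * (a - 1) by rewrite mulnBr ha muln1; lia.
  by rewrite mulKn.
rewrite -sumA big_distrr mulnC big_distrl /=.
apply: eq_big_nat => t /andP[t1 _].
have -> : k + t - 1 = (k - 1) + (t - 1) + 1 by lia.
by rewrite !expnD expn1; ring.
Qed.

Section Main.
Variables (R : realDomainType) (n k : nat) (x : 'I_n -> R).
Hypothesis hpos : forall i : 'I_n, (0 < x i)%R.
Hypothesis hinc : forall i j : 'I_n, (i < j)%N -> (x i < x j)%R.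
Hypothesis hk1 : (1 <= k)%N.
Hypothesis hkn : (k < n)%N.
Notation T := ('I_n * bool)%type.

Lemma inV1 (X : {set T}) : (X \in V1 n k) = (X \subset Bplus n) && (#|X| == k).
Proof. by rewrite inE. Qed.

Lemma inV2 (Y : {set T}) : (Y \in V2 k x) = good Y && (Y \notin V1 n k).
Proof. by rewrite /V2 inE (phiBE hpos hinc) andbC. Qed.

Lemma V1_good (X : {set T}) : X \in V1 n k -> good X.
Proof.
rewrite inV1 => /andP[h /eqP c]; apply: good_Bplus h _.
by rewrite -card_gt0 c.
Qed.

Lemma HBcondE (X Y : {set T}) : HBcond x X Y = (X \subset dag Y) || (dag Y \subset X).
Proof. by rewrite /HBcond (daggerE hpos hinc). Qed.

Lemma same_card_eq (A B : {set T}) : #|A| = #|B| -> (A \subset B) || (B \subset A) -> A = B.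
Proof.
move=> c /orP[h|h]; apply/eqP; [|rewrite eq_sym]; rewrite eqEcard h ?c //= ?leqnn.
Qed.

Lemma deg_V1_raw (X : {set T}) : X \in V1 n k ->
  HBdeg k x X =
  (\sum_(D : {set T} | [&& D \subset Bplus n, D != set0 &
       (X \subset D) || (D \subset X)]) 2 ^ (#|D| - 1)) - 1.
Proof.
move=> XV1.
have XV2 : X \in V2 k x = false by rewrite inV2 XV1 andbF.
set C := fun D : {set T} => (X \subset D) || (D \subset X).
have E : [set Y in HBvert k x | HBadj k x X Y] = [set S | good S && C (dag S)] :\ X.
  apply/setP => Y; rewrite in_setD1 [in RHS]inE.
  rewrite [in LHS]inE /HBadj XV1 XV2 /= andbF orbF HBcondE /HBvert in_setU.
  have -> : (Y \in V2 k x) = good Y && (Y \notin V1 n k) by exact: inV2.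
  have -> : (X \subset dag Y) || (dag Y \subset X) = C (dag Y) by [].
  case gY: (good Y); last by rewrite /= !andbF.
  case cY: (C (dag Y)); last by rewrite !andbF.
  have -> : (Y \in V1 n k) = (Y == X).
    apply/idP/eqP => [YV1|->//].
    move: (YV1) (XV1); rewrite !inV1 => /andP[hY /eqP cY'] /andP[hX /eqP cX].
    apply: same_card_eq; first by rewrite cY' cX.
    by move: cY; rewrite /C (dag_Bplus hY) orbC.
  by case: (Y == X).
move: (XV1); rewrite inV1 => /andP[hX _].
have h := cardsD1 X [set S | good S && C (dag S)].
move: h; rewrite [X \in _]inE (V1_good XV1) /C (dag_Bplus hX) subxx /= => h.
rewrite /HBdeg E -(count_good (fun D => (X \subset D) || (D \subset X))).
by rewrite h add1n subn1.
Qed.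


Lemma sum_V1 (X : {set T}) : X \in V1 n k ->
  \sum_(D : {set T} | [&& D \subset Bplus n, D != set0 &
       (X \subset D) || (D \subset X)]) 2 ^ (#|D| - 1) =
  \sum_(1 <= s < k.+1) 2 ^ (s - 1) * 'C(k, s)
  + \sum_(1 <= t < (n - k).+1) 2 ^ (k + t - 1) * 'C(n - k, t).
Proof.
rewrite inV1 => /andP[hX /eqP cX].
have Xne : X != set0 by rewrite -card_gt0 cX.
rewrite (bigID (fun D : {set T} => D \subset X)) /=; congr (_ + _).
- rewrite (eq_bigl (fun D : {set T} => (D \subset X) && (D != set0))); last first.
    move=> D; case DX: (D \subset X); rewrite ?andbF ?andbT //=.
    by rewrite (subset_trans DX hX) orbT andbT.
  rewrite (@sum_by_size _ _ (fun s => 2 ^ (s - 1)) k); last first.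
    by move=> D /andP[DX _]; rewrite -cX subset_leq_card.
  rewrite big_ltn // (_ : #|_| = 0) ?muln0 ?add0n; last first.
    apply/eqP; rewrite cards_eq0; apply/eqP/setP => D; rewrite !inE cards_eq0.
    by case: (D == set0); rewrite ?andbF.
  apply: eq_big_nat => s /andP[s1 _]; congr (_ * _).
  rewrite -cX -cards_draws; apply: eq_card => D; rewrite !inE.
  case: (D \subset X) => //=; case: (boolP (#|D| == s)) => h; rewrite ?andbT ?andbF //.
  by rewrite -card_gt0 (eqP h).
- rewrite (eq_bigl (fun D : {set T} => [&& X \subset D, D \subset Bplus n & #|D| != k])); last first.
    move=> D; case DX: (D \subset X); rewrite ?andbF ?andbT /=.
      case XD: (X \subset D) => //=; symmetry; apply/negbTE; rewrite negb_and negbK.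
      have -> : D = X by apply/eqP; rewrite eqEsubset DX XD.
      by rewrite cX eqxx orbT.
    rewrite orbF; case XD: (X \subset D); rewrite ?andbF //= andbT.
    case: (D \subset Bplus n) => //=.
    have -> : D != set0 by rewrite -card_gt0 (leq_trans _ (subset_leq_card XD)) // cX.
    apply/esym/negP => /eqP cD; move/negP: DX; apply.
    by rewrite -(@same_card_eq X D) ?XD // cX cD.
  rewrite (super_sum (fun d => d != k) (fun d => 2 ^ (d - 1)) hX) cX.
  have cB : #|Bplus n :\: X| = n - k by rewrite cardsD (setIidPr hX) card_Bplus cX.
  rewrite (@sum_by_size _ _ (fun t => 2 ^ (k + t - 1)) (n - k)); last first.
    by move=> W /andP[WB _]; rewrite -cB subset_leq_card.
  rewrite big_ltn // (_ : #|_| = 0) ?muln0 ?add0n; last first.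
    apply/eqP; rewrite cards_eq0; apply/eqP/setP => W; rewrite !inE.
    by case: (boolP (#|W| == 0)) => h; rewrite ?andbF // (eqP h) addn0 eqxx andbF.
  apply: eq_big_nat => t /andP[t1 _]; congr (_ * _).
  rewrite -cB -cards_draws; apply: eq_card => W; rewrite !inE.
  case: (W \subset _) => //=; case: (boolP (#|W| == t)) => h; rewrite ?andbT ?andbF //.
  by rewrite (eqP h) -{2}[k]addn0 eqn_add2l -lt0n.
Qed.


Lemma deg_V2 (Y : {set T}) r : Y \in V2 k x -> #|Y| = r -> HBdeg k x Y = dV2 n k r.
Proof.
move=> YV2 cY; move: (YV2); rewrite inV2 => /andP[gY YV1].
set D := dag Y.
have hD : D \subset Bplus n by exact: dag_sub.
have cD : #|D| = r by rewrite /D dag_card.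
have E : [set X in HBvert k x | HBadj k x Y X] =
         [set X : {set T} | [&& X \subset Bplus n, #|X| == k & (X \subset D) || (D \subset X)]].
  apply/setP => X; rewrite [in RHS]inE [in LHS]inE /HBadj (negbTE YV1) YV2 /= HBcondE -/D /HBvert in_setU.
  case: (boolP (X \in V1 n k)) => XV1 /=; first by move: XV1; rewrite inV1 => /andP[-> ->].
  by move: XV1; rewrite inV1 andbF; case: (X \subset Bplus n) (#|X| == k) => [] [].
rewrite /HBdeg E /dV2.
case: (ltngtP r k) => hrk.
- transitivity #|[set X : {set T} | [&& D \subset X, X \subset Bplus n & #|X| == k]]|; last first.
    by rewrite super_size // ?card_Bplus ?cD // ltnW.
  apply: eq_card => X; rewrite !inE.
  case: (boolP (#|X| == k)) => /= cX; rewrite ?andbF //.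
  case XD: (X \subset D) => /=.
    by move: (subset_leq_card XD); rewrite (eqP cX) cD leqNgt hrk.
  by rewrite andbT andbC.
- rewrite -cD -cards_draws; apply: eq_card => X; rewrite !inE.
  case: (boolP (#|X| == k)) => /= cX; rewrite ?andbF //.
  case DX: (D \subset X) => /=; rewrite ?orbT ?orbF ?andbT.
    by move: (subset_leq_card DX); rewrite (eqP cX) cD leqNgt hrk.
  case XD: (X \subset D); rewrite ?andbF //.
  by rewrite (subset_trans XD hD).
- subst r; rewrite -(cards1 D); apply: eq_card => X; rewrite !inE.
  apply/idP/eqP => [/andP[_ /andP[/eqP cX h]]|->]; last by rewrite hD subxx cD; rewrite ?hrk ?cY ?eqxx.
  by apply: same_card_eq => //; rewrite cX cD.
Qed.


Lemma cnt_V1 : #|V1 n k| = 'C(n, k).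
Proof. by rewrite /V1 cards_draws card_Bplus. Qed.

Lemma cnt_good r : (1 <= r)%N ->
  #|[set S : {set T} | good S && (#|dag S| == r)]| = (2 ^ (r - 1) * 'C(n, r))%N.
Proof.
move=> r1.
rewrite (count_good (fun D => #|D| == r)).
rewrite (eq_bigr (fun _ => 2 ^ (r - 1))); last by move=> D /and3P[_ _ /eqP ->].
rewrite sum_nat_cond_const mulnC; congr (_ * _).
rewrite -[in RHS](card_Bplus n) -cards_draws; apply: eq_card => D; rewrite !inE.
case: (D \subset Bplus n) => //=; case: (boolP (#|D| == r)) => h; rewrite ?andbT ?andbF //.
by rewrite -card_gt0 (eqP h).
Qed.

Lemma V2_card (Y : {set T}) : Y \in V2 k x -> #|dag Y| = #|Y|.
Proof. by rewrite inV2 => /andP[g _]; rewrite dag_card. Qed.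

Lemma inV2r (Y : {set T}) r :
  (Y \in [set Y in V2 k x | #|Y| == r]) = good Y && (Y \notin V1 n k) && (#|Y| == r).
Proof. by rewrite in_set inV2. Qed.

Lemma in_good_r (Y : {set T}) r :
  (Y \in [set S : {set T} | good S && (#|dag S| == r)]) = good Y && (#|dag Y| == r).
Proof. by rewrite in_set. Qed.

Lemma cnt_V2 r : (1 <= r)%N ->
  #|[set Y in V2 k x | #|Y| == r]| = mV2 n k r.
Proof.
move=> r1; rewrite /mV2.
case: (boolP (r == k)) => [/eqP hr|hr].
  subst r.
  have E : [set Y in V2 k x | #|Y| == k] =
           [set S : {set T} | good S && (#|dag S| == k)] :\: V1 n k.
    apply/setP => Y; rewrite inV2r in_setD in_good_r.
    case: (boolP (good Y)) => g //=; last by rewrite andbF.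
    by rewrite dag_card // andbC.
  rewrite E cardsD (setIidPr _) ?cnt_good // ?cnt_V1 ?mulnBl ?mul1n //.
  apply/subsetP => X XV1; rewrite inE V1_good //=.
  by move: XV1; rewrite inV1 => /andP[hX cX]; rewrite dag_Bplus.
rewrite -cnt_good //; apply: eq_card => Y; rewrite inV2r in_good_r.
case: (boolP (good Y)) => g //=; rewrite dag_card //.
case: (boolP (#|Y| == r)) => h; rewrite ?andbF ?andbT //.
by rewrite inV1 (eqP h) (negbTE hr) andbF.
Qed.


Lemma deg_V1 (X : {set T}) : X \in V1 n k ->
  HBdeg k x X =
    (\sum_(1 <= s < k.+1) 2 ^ (s - 1) * 'C(k, s) - 1
     + \sum_(1 <= t < (n - k).+1) 2 ^ (k + t - 1) * 'C(n - k, t))%N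
  /\ HBdeg k x X = dV1 n k.
Proof.
move=> XV1; have E : HBdeg k x X =
    (\sum_(1 <= s < k.+1) 2 ^ (s - 1) * 'C(k, s) - 1
     + \sum_(1 <= t < (n - k).+1) 2 ^ (k + t - 1) * 'C(n - k, t))%N.
  have hA : (1 <= \sum_(1 <= s < k.+1) 2 ^ (s - 1) * 'C(k, s))%N.
    by rewrite big_ltn // subnn expn0 bin1 mul1n (leq_trans hk1 (leq_addr _ _)).
  rewrite deg_V1_raw // sum_V1 //; lia.
by split => //; rewrite E numV1.
Qed.

Lemma sum_one m N c : (1 <= m <= N)%N ->
  \sum_(1 <= r < N.+1) (m == r) * c = c.
Proof.
case/andP => m1 mN.
rewrite (eq_bigr (fun r => if m == r then c else 0)); last by move=> r _; case: (m == r); rewrite ?mul1n ?mul0n.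
rewrite -big_mkcond -big_filter.
rewrite (eq_filter (a2 := pred1 m)); last by move=> r /=; rewrite eq_sym.
rewrite filter_pred1_uniq ?iota_uniq ?big_seq1 //.
rewrite mem_iota m1 /=; lia.
Qed.

Lemma V2_size (Y : {set T}) : Y \in V2 k x -> (1 <= #|Y| <= n)%N.
Proof.
move=> YV2; rewrite -(V2_card YV2) card_gt0 dag0.
move: YV2; rewrite inV2 => /andP[/and3P[ne _ _] _]; rewrite ne /=.
by rewrite -[X in (_ <= X)%N](card_Bplus n) subset_leq_card // dag_sub.
Qed.

Lemma deg_perm :
  perm_eq [seq HBdeg k x v | v <- enum (HBvert k x)] (claimed_degrees n k).
Proof.
apply/permP => p.
rewrite count_map -sum1_count big_enum_cond /claimed_degrees count_cat count_nseq.
rewrite count_flatten -map_comp sumnE big_map.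
rewrite big_mkcondr /=.
rewrite (eq_bigr (fun v => (p (HBdeg k x v) : nat))); last first.
  by move=> v _; case: (p _).
rewrite (bigID (fun v => v \in V1 n k)) /=; congr (_ + _).
  rewrite (eq_bigl (fun v => v \in V1 n k)); last first.
    move=> v /=; rewrite /HBvert in_setU; apply/idP/idP => [/andP[]//|h]; by rewrite h.
  rewrite (eq_bigr (fun _ => (p (dV1 n k) : nat))); last first.
    move=> v vV1; have [_ ->] := deg_V1 vV1; by [].
  by rewrite sum_nat_const cnt_V1 mulnC.
rewrite (eq_bigl (fun v : {set T} => v \in V2 k x)); last first.
  move=> v; rewrite /HBvert in_setU; case vV1: (v \in V1 n k) => /=; rewrite ?andbT //.
  by rewrite inV2 vV1 andbF.
rewrite (eq_bigr (fun v : {set T} => \sum_(1 <= r < n.+1) (#|v| == r) * (p (dV2 n k r) : nat))); last first.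
  move=> v vV2.
  rewrite (eq_bigr (fun r => (#|v| == r) * (p (HBdeg k x v) : nat))).
    by rewrite sum_one ?V2_size.
  move=> r _; case: eqP => [<-|]; rewrite ?mul0n //.
  by rewrite (deg_V2 vV2 erefl).
rewrite exchange_big /=.
have -> : iota 1 n = index_iota 1 n.+1 by rewrite /index_iota subn1.
apply: eq_big_nat => r /andP[r1 _] /=.
rewrite count_nseq -cnt_V2 // mulnC -sum_nat_const.
rewrite big_mkcond /= [RHS]big_mkcond /=; apply: eq_bigr => v _.
have -> : (v \in [set Y in V2 k x | #|Y| == r]) = (v \in V2 k x) && (#|v| == r).
  by rewrite inV2r inV2.
by case: (v \in V2 k x); case: (#|v| == r); rewrite ?mul1n ?mul0n.
Qed.


Lemma main_sec :
  ((forall X, X \in V1 n k ->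
      HBdeg k x X =
        (\sum_(1 <= s < k.+1) 2 ^ (s - 1) * 'C(k, s) - 1
         + \sum_(1 <= t < (n - k).+1) 2 ^ (k + t - 1) * 'C(n - k, t))%N
      /\ HBdeg k x X = dV1 n k)
   /\ #|V1 n k| = 'C(n, k))
  /\ (forall r, (1 <= r)%N -> (r < k)%N ->
        (forall Y, Y \in V2 k x -> #|Y| = r -> HBdeg k x Y = 'C(n - r, k - r))
        /\ #|[set Y in V2 k x | #|Y| == r]| = (2 ^ (r - 1) * 'C(n, r))%N)
  /\ ((forall Y, Y \in V2 k x -> #|Y| = k -> HBdeg k x Y = 1%N)
        /\ #|[set Y in V2 k x | #|Y| == k]| = ((2 ^ (k - 1) - 1) * 'C(n, k))%N)
  /\ (forall r, (k < r)%N -> (r <= n)%N ->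
        (forall Y, Y \in V2 k x -> #|Y| = r -> HBdeg k x Y = 'C(r, k))
        /\ #|[set Y in V2 k x | #|Y| == r]| = (2 ^ (r - 1) * 'C(n, r))%N)
  /\ sort geq [seq HBdeg k x v | v <- enum (HBvert k x)]
     = sort geq (claimed_degrees n k).
Proof.
split; first by split; [move=> X XV1; exact: deg_V1 | exact: cnt_V1].
split.
  move=> r r1 rk; split.
    by move=> Y YV2 cY; rewrite (deg_V2 YV2 cY) /dV2 rk.
  by rewrite cnt_V2 // /mV2 (ltn_eqF rk).
split.
  split; first by move=> Y YV2 cY; rewrite (deg_V2 YV2 cY) /dV2 ltnn eqxx.
  by rewrite cnt_V2 // /mV2 eqxx.
split.
  move=> r kr rn; split.
    by move=> Y YV2 cY; rewrite (deg_V2 YV2 cY) /dV2 ltnNge (ltnW kr) /= (gtn_eqF kr).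
  by rewrite cnt_V2 ?(leq_trans hk1 (ltnW kr)) // /mV2 (gtn_eqF kr).
apply/perm_sortP; last exact: deg_perm.
- by move=> a b; exact: leq_total.
- by move=> a b c h1 h2; exact: leq_trans h2 h1.
- by move=> a b h; apply: anti_leq; rewrite andbC.
Qed.

End Main.


Unset Implicit Arguments.

Theorem mainTheorem10 (R : realDomainType) (n k : nat) (x : 'I_n -> R)
  (hpos : forall i : 'I_n, (0 < x i)%R)
  (hinc : forall i j : 'I_n, (i < j)%N -> (x i < x j)%R)
  (hn : (2 <= n)%N) (hk1 : (1 <= k)%N) (hkn : (k < n)%N) :
  (* (i) *)
  ((forall X, X \in V1 n k ->
      HBdeg k x X =
        (\sum_(1 <= s < k.+1) 2 ^ (s - 1) * 'C(k, s) - 1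
         + \sum_(1 <= t < (n - k).+1) 2 ^ (k + t - 1) * 'C(n - k, t))%N
      /\ HBdeg k x X = dV1 n k)
   /\ #|V1 n k| = 'C(n, k))
  (* (ii) *)
  /\ (forall r, (1 <= r)%N -> (r < k)%N ->
        (forall Y, Y \in V2 k x -> #|Y| = r -> HBdeg k x Y = 'C(n - r, k - r))
        /\ #|[set Y in V2 k x | #|Y| == r]| = (2 ^ (r - 1) * 'C(n, r))%N)
  (* (iii) *)
  /\ ((forall Y, Y \in V2 k x -> #|Y| = k -> HBdeg k x Y = 1%N)
        /\ #|[set Y in V2 k x | #|Y| == k]| = ((2 ^ (k - 1) - 1) * 'C(n, k))%N)
  (* (iv) *)
  /\ (forall r, (k < r)%N -> (r <= n)%N ->
        (forall Y, Y \in V2 k x -> #|Y| = r -> HBdeg k x Y = 'C(r, k))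
        /\ #|[set Y in V2 k x | #|Y| == r]| = (2 ^ (r - 1) * 'C(n, r))%N)
  (* degree sequence *)
  /\ sort geq [seq HBdeg k x v | v <- enum (HBvert k x)]
     = sort geq (claimed_degrees n k).
Proof.
by apply: main_sec.
Qed.
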